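(* Fix integers $1\le n<N$, probabilities $p_0,p_1\in(0,1)$, a nonempty collection $\mathcal V$ of subsets of $\{1,\dots,N\}$ each of cardinality $n$, integers $0\le m'_\alpha\le m_\alpha$, and a threshold $b\in\mathbb R$. Let $G^{(1)},G^{(2)},\ldots$ be random undirected graphs on the vertex set $\{1,\dots,N\}$, with adjacency matrices $G^{(t)}\in\{0,1\}^{N\times N}$. For a subset $V\in\mathcal V$ and integers $k\le t$ set \[ R_{t,k,V}=\sum_{\substack{i,j\in V\\ i<j}}\sum_{m=k}^{t}\Big[G^{(m)}_{ij}\log\frac{p_1}{p_0}+(1-G^{(m)}_{ij})\log\frac{1-p_1}{1-p_0}\Big], \] and define the stopping time \[ T_{\mathrm G}=\inf\Big\{t:\ \max_{t-m_\alpha\le k\le t-m'_\alpha}\ \max_{V\in\mathcal V} R_{t,k,V}>b\Big\}. \] Let $\mathbb P_\infty$ denote the probability measure under which $G^{(1)},G^{(2)},\ldots$ are i.i.d. Erdős–Rényi graphs $\mathrm{ER}(N,p_0)$, i.e. all entries $G^{(t)}_{ij}$, $i<j$, $t\ge1$, are independent Bernoulli$(p_0)$. Then \[ \sup_{\tau\ge 1}\mathbb P_\infty\big(\tau\le T_{\mathrm G}<\tau+m_\alpha\big)\le 2m_\alpha e^{-b}\binom{N}{n}. \]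
   Context: $\mathrm{ER}(N,p)$ denotes the Erdős–Rényi random graph on $N$ labeled vertices in which each of the $\binom N2$ possible edges is present independently with probability $p$; $G^{(t)}_{ij}=G^{(t)}_{ji}=1$ iff vertices $i$ and $j$ are joined at time $t$. The collection $\mathcal V$ is the set of candidate subgraphs (vertex subsets of size $n$) where a change might occur; $|\mathcal V|\le\binom Nn$. *)

(* Defs.v *)
From HB Require Import structures.
From mathcomp Require Import all_boot all_order all_algebra.
From mathcomp Require Import all_classical all_reals all_analysis.
Set Implicit Arguments. Unset Strict Implicit. Unset Printing Implicit Defensive.
Import Order.TTheory GRing.Theory Num.Theory.
Local Open Scope classical_set_scope.
Local Open Scope ring_scope.

Definition mutually_independent d (T : measurableType d) (R : realType)
  (P : probability T R) (I : eqType) (D : set I) (E : I -> set T) : Prop :=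
  forall s : seq I, uniq s -> (forall i, i \in s -> D i) ->
    P (\bigcap_(i in [set i | i \in s]) E i) = (\prod_(i <- s) P (E i))%E.

Definition Rstat (T : Type) (R : realType) (N : nat) (p0 p1 : R)
  (G : nat -> 'I_N -> 'I_N -> T -> bool) (t k : nat) (V : {set 'I_N}) (x : T) : R :=
  \sum_(i in V) \sum_(j in V | (i < j)%N) \sum_(k <= mm < t.+1)
     ((G mm i j x)%:R * ln (p1 / p0) + (1 - (G mm i j x)%:R) * ln ((1 - p1) / (1 - p0))).

(* The detection condition at time t:
   max_{t-m <= k <= t-m', k >= 1} max_{V in Vs} R_{t,k,V} > b
   (max over an empty range is -oo, i.e. no alarm). *)
Definition alarm (T : Type) (R : realType) (N : nat) (p0 p1 : R)
  (Vs : {set {set 'I_N}}) (m m' : nat) (b : R)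
  (G : nat -> 'I_N -> 'I_N -> T -> bool) (t : nat) (x : T) : Prop :=
  exists k : nat, [/\ (1 <= k)%N, (t <= k + m)%N, (k + m' <= t)%N &
    exists2 V, V \in Vs & b < Rstat p0 p1 G t k V x].

(* The stopping time T_G = inf { t : alarm at t } (inf of the empty set = +oo),
   as an extended real. *)
Definition TG (T : Type) (R : realType) (N : nat) (p0 p1 : R)
  (Vs : {set {set 'I_N}}) (m m' : nat) (b : R)
  (G : nat -> 'I_N -> 'I_N -> T -> bool) (x : T) : \bar R :=
  ereal_inf [set (t%:R)%:E | t in [set t : nat | alarm p0 p1 Vs m m' b G t x]].

(* Main.v *)
Require Import Defs.
From HB Require Import structures.
From mathcomp Require Import all_boot all_order all_algebra.
From mathcomp Require Import all_classical all_reals all_analysis.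
From mathcomp Require Import ring lra zify.
Import Order.TTheory GRing.Theory Num.Theory.
Local Open Scope classical_set_scope.
Local Open Scope ring_scope.

Section Proof.
Variables (d : measure_display) (T : measurableType d) (R : realType)
  (P : probability T R) (N : nat) (p0 p1 b : R)
  (G : nat -> 'I_N -> 'I_N -> T -> bool).
Hypothesis p0_gt0 : 0 < p0.
Hypothesis p0_lt1 : p0 < 1.
Hypothesis p1_gt0 : 0 < p1.
Hypothesis p1_lt1 : p1 < 1.
Hypothesis mG : forall t i j, measurable [set x | G t i j x].
Hypothesis PG : forall t (i j : 'I_N), (1 <= t)%N -> (i < j)%N -> P [set x | G t i j x] = p0%:E.
Hypothesis indep : mutually_independent P
    [set tij : nat * 'I_N * 'I_N | (1 <= tij.1.1)%N && (tij.1.2 < tij.2)%N]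
    (fun tij => [set x | G tij.1.1 tij.1.2 tij.2 x]).

Definition Ix := (nat * 'I_N * 'I_N)%type.
Definition Gi (i : Ix) (x : T) : bool := G i.1.1 i.1.2 i.2 x.
Definition Dp (i : Ix) : bool := (1 <= i.1.1)%N && (i.1.2 < i.2)%N.
Definition w (β : bool) : R := if β then p0 else 1 - p0.
Definition cyl (s : seq Ix) (a : Ix -> bool) : set T :=
  [set x | forall i, i \in s -> Gi i x = a i].

Lemma measurable_Gi_eq i β : measurable [set x | Gi i x = β].
Proof.
case: β.
  by apply: mG.
have -> : [set x | Gi i x = false] = ~` [set x | G i.1.1 i.1.2 i.2 x].
  apply/seteqP; split => x /=; rewrite /Gi; [by move=> -> | by move/negP/negbTE].
exact: measurableC.
Qed.

Lemma measurable_cyl s a : measurable (cyl s a).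
Proof.
elim: s => [|i s IH].
  have -> : cyl [::] a = setT by apply/seteqP; split => x //= _ i; rewrite in_nil.
  exact: measurableT.
have -> : cyl (i :: s) a = [set x | Gi i x = a i] `&` cyl s a.
  apply/seteqP; split => x /=.
    by move=> H; split; [apply: H; rewrite mem_head | move=> j js; apply: H; rewrite in_cons js orbT].
  by move=> [H1 H2] j; rewrite in_cons => /orP[/eqP -> //| js]; apply: H2.
exact: measurableI (measurable_Gi_eq _ _) IH.
Qed.

Lemma w_ge0 (β : bool) : 0 <= w β.
Proof. case: β; rewrite /w; [exact: ltW | by rewrite subr_ge0 ltW]. Qed.

Lemma cyl_law n : forall s a, (count (fun i => ~~ a i) s <= n)%N -> uniq s -> all Dp s ->
  P (cyl s a) = (\prod_(i <- s) w (a i))%:E.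
Proof.
elim: n => [|n IH] s a.
  rewrite leqn0 => /eqP Hc us Ds.
  have Ha : forall i, i \in s -> a i.
    move=> i si; apply: negbNE; apply/negP => Hn.
    have : has (fun i => ~~ a i) s by apply/hasP; exists i.
    by rewrite has_count Hc.
  have -> : cyl s a = \bigcap_(i in [set i | i \in s]) [set x | G i.1.1 i.1.2 i.2 x].
    apply/seteqP; split => x /=.
      by move=> H i /= si; have := H i si; rewrite /Gi Ha.
    by move=> H i si; rewrite Ha // ; apply: (H i si).
  rewrite (indep s us); last by move=> i si; move/allP: Ds => /(_ i si).
  rewrite -prodEFin big_seq_cond [in RHS]big_seq_cond; apply: eq_bigr => i /andP[si _].
  move/allP: Ds => /(_ i si) /andP[h1 h2].
  by rewrite PG // Ha.
move=> Hc us Ds.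
case: (boolP (has (fun i => ~~ a i) s)) => Hh; last first.
  by apply: IH => //; move: Hh; rewrite has_count lt0n negbK => /eqP ->.
have [i0 si0 ai0] := hasP Hh.
have Hp := perm_to_rem si0.
have Hc' : (count (fun i => ~~ a i) (rem i0 s) <= n)%N.
  by move: Hc; rewrite ((permP Hp) (fun i => ~~ a i)) /= ai0.
pose a' := fun i => if i == i0 then true else a i.
have ni0 : (i0 \in rem i0 s) = false by apply: mem_rem_uniqF.
have Hc'' : (count (fun i => ~~ a' i) s <= n)%N.
  rewrite ((permP Hp) (fun i => ~~ a' i)) /= /a' eqxx /= add0n.
  rewrite (@eq_in_count _ _ (fun i => ~~ a i)) // => j jr /=.
  by case: eqP => // E; move: jr; rewrite E ni0.
have Ds' : all Dp (rem i0 s).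
  by apply/allP => j /mem_rem jr; move/allP: Ds; apply.
have us' := rem_uniq i0 us.
have E1 : cyl s a = cyl (rem i0 s) a `\` [set x | Gi i0 x].
  apply/seteqP; split => x /=.
    move=> H; split; first by move=> j /mem_rem; apply: H.
    by rewrite (H i0 si0); apply/negP.
  move=> [H1 H2] j js.
  case: (eqVneq j i0) => [->|ne]; first by move/negP: H2 => /negbTE ->; rewrite (negbTE ai0).
  by apply: H1; rewrite (perm_mem Hp) in js; move: js; rewrite in_cons (negbTE ne).
have E2 : cyl (rem i0 s) a `&` [set x | Gi i0 x] = cyl s a'.
  apply/seteqP; split => x /=.
    move=> [H1 H2] j js; rewrite /a'; case: eqP => [->//|ne].
    by apply: H1; rewrite (perm_mem Hp) in js; move: js; rewrite in_cons => /orP[/eqP//|].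
  move=> H; split.
    move=> j jr; rewrite (H j (mem_rem jr)) /a'; case: eqP => // E; by move: jr; rewrite E ni0.
  by rewrite (H i0 si0) /a' eqxx.
have fin : (P (cyl (rem i0 s) a) < +oo)%E by rewrite (IH _ _ Hc' us' Ds') ltry.
have HD : P (cyl (rem i0 s) a `\` [set x | Gi i0 x]) = (P (cyl (rem i0 s) a) - P (cyl (rem i0 s) a `&` [set x | Gi i0 x]))%E.
  by apply: measureD => //; [exact: measurable_cyl | exact: mG].
rewrite E1 HD E2 (IH _ _ Hc' us' Ds') (IH _ _ Hc'' us Ds) -EFinB; congr (_%:E).
rewrite (perm_big _ Hp) [in RHS](perm_big _ Hp) !big_cons /a' eqxx /=.
have -> : \prod_(j <- rem i0 s) w (if j == i0 then true else a j) = \prod_(j <- rem i0 s) w (a j).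
  rewrite big_seq_cond [in RHS]big_seq_cond; apply: eq_bigr => j /andP[jr _].
  by case: eqP => // E; move: jr; rewrite E ni0.
by rewrite (negbTE ai0) /=; ring.
Qed.


Definition lam (β : bool) : R :=
  (β%:R * ln (p1 / p0) + (1 - β%:R) * ln ((1 - p1) / (1 - p0))).
Arguments lam : simpl never.

Fixpoint memE (l : seq (option Ix)) (y : R) (x : T) : Prop :=
  match l with
  | [::] => False
  | None :: r => b < y \/ memE r y x
  | Some i :: r => memE r (y + lam (Gi i x)) x
  end.

Lemma lam_sum : p0 * expR (lam true) + (1 - p0) * expR (lam false) = 1.
Proof.
have -> : lam true = ln (p1 / p0) by rewrite /lam /= mul1r subrr mul0r addr0.
have -> : lam false = ln ((1 - p1) / (1 - p0)) by rewrite /lam /= mul0r subr0 mul1r add0r.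
have q0 : 0 < 1 - p0 by rewrite subr_gt0.
have q1 : 0 < 1 - p1 by rewrite subr_gt0.
rewrite !lnK ?posrE ?divr_gt0 //.
rewrite [p0 * _]mulrC [(1 - p0) * _]mulrC !divfK ?gt_eqF //.
by rewrite addrC subrK.
Qed.

Lemma measurable_memE l : forall y, measurable [set x | memE l y x].
Proof.
elim: l => [|[i|] r IH] y /=.
- by have -> : [set x | False] = @set0 T by apply/seteqP; split => x.
- have -> : [set x | memE r (y + lam (Gi i x)) x] =
    ([set x | Gi i x = true] `&` [set x | memE r (y + lam true) x]) `|`
    ([set x | Gi i x = false] `&` [set x | memE r (y + lam false) x]).
    apply/seteqP; split => x /=.
      by case: (Gi i x) => H; [left|right].
    by case => -[->].
  by apply: measurableU; apply: measurableI; rewrite ?measurable_Gi_eq ?IH //; apply: measurable_Gi_eq.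
- have [hy|hy] : b < y \/ y <= b by case: ltrP; [left|right].
    have -> : [set x | b < y \/ memE r y x] = setT by apply/seteqP; split => x //= _; left.
    exact: measurableT.
  have -> : [set x | b < y \/ memE r y x] = [set x | memE r y x].
    by apply/seteqP; split => x /=; [case => // /(le_lt_trans hy); rewrite ltxx | right].
  exact: IH.
Qed.

Definition upd (a : Ix -> bool) (i : Ix) (β : bool) := fun j => if j == i then β else a j.

Lemma prod_w_ge0 (s : seq Ix) a : 0 <= \prod_(i <- s) w (a i).
Proof. by apply: prodr_ge0 => i _; apply: w_ge0. Qed.

Lemma ville l : forall s a y, uniq (s ++ pmap id l) -> all Dp (s ++ pmap id l) ->
  (P (cyl s a `&` [set x | memE l y x]) <= (\prod_(i <- s) w (a i) * expR (y - b))%:E)%E.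
Proof.
elim: l => [|[i|] r IH] s a y us Ds /=.
- have -> : cyl s a `&` [set x | False] = set0 by apply/seteqP; split => x // [].
  by rewrite measure0 lee_fin mulr_ge0 ?prod_w_ge0 ?expR_ge0.
- have ni : i \notin s.
    by move: us; rewrite cat_uniq => /and3P[_ /hasPn H _]; apply: H; rewrite mem_head.
  have Di : Dp i by move/allP: Ds; apply; rewrite mem_cat mem_head orbT.
  have Hp : perm_eq (s ++ i :: pmap id r) ((i :: s) ++ pmap id r).
    by rewrite (perm_catCA s [:: i]) perm_refl.
  have us' : uniq ((i :: s) ++ pmap id r) by rewrite -(perm_uniq Hp).
  have Ds' : all Dp ((i :: s) ++ pmap id r) by rewrite -(perm_all _ Hp).
  pose A β := cyl (i :: s) (upd a i β) `&` [set x | memE r (y + lam β) x].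
  have mA β : measurable (A β) by apply: measurableI; [apply: measurable_cyl | apply: measurable_memE].
  have sub : cyl s a `&` [set x | memE r (y + lam (Gi i x)) x] `<=` A true `|` A false.
    move=> x /= [Hc Hm].
    have Hc' : cyl (i :: s) (upd a i (Gi i x)) x.
      move=> j; rewrite in_cons /upd; case: eqP => [-> //| _] /= js; exact: Hc.
    by case E : (Gi i x) Hc' Hm => Hc' Hm; [left|right]; split.
  have Hb β : (P (A β) <= (w β * \prod_(j <- s) w (a j) * expR (y + lam β - b))%:E)%E.
    apply: le_trans (IH _ _ _ us' Ds') _; rewrite big_cons lee_fin /upd eqxx.
    have -> : \prod_(j <- s) w (if j == i then β else a j) = \prod_(j <- s) w (a j).
      rewrite big_seq_cond [in RHS]big_seq_cond; apply: eq_bigr => j /andP[js _].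
      by case: eqP => // E; move: ni; rewrite -E js.
    by [].
  apply: le_trans (le_measure _ _ _ sub) _.
  - by rewrite inE; apply: measurableI; [apply: measurable_cyl|apply: (measurable_memE (Some i :: r))].
  - by rewrite inE; apply: measurableU.
  apply: le_trans (measureU2 _ (mA true) (mA false)) _.
  apply: le_trans (leeD (Hb true) (Hb false)) _.
  rewrite -EFinD lee_fin le_eqVlt; apply/orP; left; apply/eqP.
  have E β : expR (y + lam β - b) = expR (y - b) * expR (lam β).
    by rewrite -expRD; congr expR; rewrite addrAC.
  rewrite !E /w; transitivity (\prod_(j <- s) w (a j) * expR (y - b) *
     (p0 * expR (lam true) + (1 - p0) * expR (lam false))); first by rewrite /w; ring.
  by rewrite lam_sum mulr1.
- have [hy|hy] : b < y \/ y <= b by case: ltrP; [left|right].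
    apply: (@le_trans _ _ (P (cyl s a))).
      apply: le_measure; last exact: subIsetl.
      + by rewrite inE; apply: measurableI; [apply: measurable_cyl|apply: (measurable_memE (None :: r))].
      + by rewrite inE; apply: measurable_cyl.
    rewrite (@cyl_law _ s a (leqnn _)); last first.
      + by move: Ds; rewrite all_cat => /andP[].
      + by move: us; rewrite cat_uniq => /andP[].
    rewrite lee_fin -{1}[\prod_(i <- s) _]mulr1; apply: ler_wpM2l; first exact: prod_w_ge0.
    by apply: le_trans (expR_ge1Dx _); rewrite lerDl subr_ge0 ltW.
  have -> : [set x | b < y \/ memE r y x] = [set x | memE r y x].
    by apply/seteqP; split => x /=; [case => // /(le_lt_trans hy); rewrite ltxx | right].
  exact: IH.
Qed.

Definition pairs (V : {set 'I_N}) : {set 'I_N * 'I_N} :=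
  [set p | (p.1 \in V) && ((p.2 \in V) && (p.1 < p.2)%N)].
Definition layer (V : {set 'I_N}) (u : nat) : seq Ix :=
  [seq (u, p.1, p.2) | p <- enum (pairs V)].
Fixpoint Lrec (V : {set 'I_N}) (s c : nat) : seq (option Ix) :=
  match c with
  | 0 => [::]
  | c'.+1 => map Some (layer V s) ++ None :: Lrec V s.+1 c'
  end.
Definition Lsum V u x := \sum_(i <- layer V u) lam (Gi i x).

Lemma memE_cat l r y x : memE (map Some l ++ r) y x = memE r (y + \sum_(i <- l) lam (Gi i x)) x.
Proof.
elim: l y => [|i l IH] y /=; first by rewrite big_nil addr0.
by rewrite IH big_cons /lam !addrA.
Qed.

Lemma memE_Lrec V c : forall s y x t, (s <= t < s + c)%N ->
  b < y + \sum_(s <= u < t.+1) Lsum V u x -> memE (Lrec V s c) y x.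
Proof.
elim: c => [|c IH] s y x t Ht Hb; first by move: Ht; rewrite addn0 => /andP[h1 h2]; move: (leq_ltn_trans h1 h2); rewrite ltnn.
rewrite /= memE_cat /=.
case: (eqVneq t s) => [Ets|Nts].
  by left; move: Hb; rewrite Ets big_nat1.
right; apply: (IH _ _ _ t); first by move: Ht Nts; case/andP => h1 h2 h3; apply/andP; split; [rewrite ltn_neqAle eq_sym h3 h1 | rewrite addSnnS].
move: Ht => /andP[h1 _].
by rewrite big_ltn ?ltnS // addrA in Hb.
Qed.

Lemma Rstat_Lsum t k V x : Rstat p0 p1 G t k V x = \sum_(k <= u < t.+1) Lsum V u x.
Proof.
rewrite /Rstat pair_big_dep /= exchange_big /=; apply: eq_bigr => u _.
rewrite /Lsum /layer big_map big_enum /=; apply: eq_bigl => p; by rewrite inE.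
Qed.

Lemma pmap_Lrec_cons (l : seq Ix) r : pmap id (map Some l ++ None :: r) = l ++ pmap id r.
Proof. by elim: l => //= i l ->. Qed.

Lemma Lrec_props V c : forall s, uniq (pmap id (Lrec V s c)) /\
  all (fun i : Ix => (s <= i.1.1)%N && (i.1.2 < i.2)%N) (pmap id (Lrec V s c)).
Proof.
elim: c => [|c IH] s //=.
rewrite pmap_Lrec_cons; have [u a] := IH s.+1.
have Hl : forall z, z \in layer V s -> (z.1.1 = s) /\ (z.1.2 < z.2)%N.
  move=> z /mapP [p]; rewrite mem_enum inE => /andP[_ /andP[_ h]] -> //.
split.
  rewrite cat_uniq u andbT; apply/andP; split.
    rewrite map_inj_uniq ?enum_uniq // => p q [] h1 h2.
    by case: p h1 h2 => u1 u2; case: q => v1 v2 /= -> ->.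
  apply/hasPn => z zr; apply/negP => /Hl [E _].
  by move/allP: a => /(_ z zr) /andP[]; rewrite E ltnn.
rewrite all_cat; apply/andP; split.
  by apply/allP => z /Hl [-> ->]; rewrite leqnn.
apply/allP => z zr; move/allP: a => /(_ z zr) /andP[h1 h2]; rewrite h2 andbT.
exact: ltnW.
Qed.

Lemma measurable_Rstat t k V : measurable [set x | b < Rstat p0 p1 G t k V x].
Proof.
pose l := flatten [seq layer V u | u <- index_iota k t.+1].
have -> : [set x | b < Rstat p0 p1 G t k V x] = [set x | memE (map Some l ++ [:: None]) 0 x].
  apply/seteqP; split => x /=; rewrite memE_cat /= add0r Rstat_Lsum /l big_flatten /= big_map /Lsum.
    by move=> H; left.
  by case.
exact: measurable_memE.
Qed.

Lemma in_bigsetU (I0 : eqType) (r : seq I0) (Pr : pred I0) (F : I0 -> set T) x :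
  (\big[setU/set0]_(i <- r | Pr i) F i) x <-> exists2 i, (i \in r) && Pr i & F i x.
Proof.
elim: r => [|i r IH]; first by rewrite big_nil; split => // -[].
rewrite big_cons; case: ifP => Pi.
  split.
    case => [H|/IH [j /andP[jr Pj] Fj]]; first by exists i; rewrite ?mem_head ?Pi.
    by exists j; rewrite ?in_cons ?jr ?orbT.
  move=> [j /andP[]]; rewrite in_cons => /orP[/eqP -> _ H|jr Pj H]; first by left.
  by right; apply/IH; exists j; rewrite ?jr.
split; first by move/IH => [j /andP[jr Pj] Fj]; exists j; rewrite ?in_cons ?jr ?orbT.
move=> [j /andP[]]; rewrite in_cons => /orP[/eqP -> |jr Pj H]; first by rewrite Pi.
by apply/IH; exists j; rewrite ?jr.
Qed.

Section Tau.
Variables (Vs : {set {set 'I_N}}) (m m' : nat).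

Definition alarmset t := [set x | alarm p0 p1 Vs m m' b G t x].

Lemma measurable_alarm t : measurable (alarmset t).
Proof.
have -> : alarmset t = \big[setU/set0]_(k <- iota 0 t.+1 | (1 <= k)%N && (t <= k + m)%N && (k + m' <= t)%N)
   \big[setU/set0]_(V <- enum Vs) [set x | b < Rstat p0 p1 G t k V x].
  apply/seteqP; split => x.
    move=> [k [h1 h2 h3 [V VV HV]]]; apply/in_bigsetU; exists k.
      apply/andP; split; [by rewrite mem_iota add0n leq0n /= ltnS (leq_trans _ h3) ?leq_addr | by rewrite h1 h2 h3].
    by apply/in_bigsetU; exists V => //; rewrite mem_enum VV.
  move/in_bigsetU => [k /andP[_ /andP[/andP[h1 h2] h3]] /in_bigsetU [V /andP[VV _] HV]].
  exists k; split; [exact: h1|exact: h2|exact: h3|exists V; [by rewrite -mem_enum | exact: HV]].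
by apply: bigsetU_measurable => k _; apply: bigsetU_measurable => V _; apply: measurable_Rstat.
Qed.

Definition Uset n := \big[setU/set0]_(t <- iota 0 n) alarmset t.

Lemma measurable_Uset n : measurable (Uset n).
Proof. by apply: bigsetU_measurable => t _; apply: measurable_alarm. Qed.

Lemma in_Uset n x : Uset n x <-> exists2 t, (t < n)%N & alarm p0 p1 Vs m m' b G t x.
Proof.
split; first by move/in_bigsetU => [t /andP[]]; rewrite mem_iota add0n => /andP[_ h] _ H; exists t.
by move=> [t h H]; apply/in_bigsetU; exists t; rewrite ?mem_iota ?add0n ?h.
Qed.

Lemma TG_lb x t : alarm p0 p1 Vs m m' b G t x -> (TG p0 p1 Vs m m' b G x <= (t%:R)%:E)%E.
Proof. by move=> H; apply: ereal_inf_lbound; exists t. Qed.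

Lemma Aset_eq tau : [set x | (tau%:R%:E <= TG p0 p1 Vs m m' b G x)%E /\
                            (TG p0 p1 Vs m m' b G x < (tau + m)%:R%:E)%E] = Uset (tau + m) `\` Uset tau.
Proof.
apply/seteqP; split => x /=.
  move=> [H1 H2]; split.
    have [y [t At <-] yl] := ereal_inf_lt H2.
    by apply/in_Uset; exists t => //; move: yl; rewrite lte_fin ltr_nat.
  move/in_Uset => [t tl At]; have := le_trans H1 (TG_lb _ _ At).
  by rewrite lee_fin ler_nat leqNgt tl.
move=> [/in_Uset [t tl At] H2]; split.
  apply: le_ereal_inf_tmp => _ [s As <-]; rewrite lee_fin ler_nat leqNgt; apply/negP => sl.
  by apply: H2; apply/in_Uset; exists s.
by apply: le_lt_trans (TG_lb _ _ At) _; rewrite lte_fin ltr_nat.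
Qed.

Definition kr tau r := maxn 1 (tau - m + r).
Definition Bset tau r V := [set x | memE (Lrec V (kr tau r) (tau + m - kr tau r)) 0 x].
Definition Bu tau r := \big[setU/set0]_(j < #|Vs|) Bset tau r (nth (finset.set0 : {set 'I_N}) (enum Vs) j).

Lemma measurable_Bu tau r : measurable (Bu tau r).
Proof. by apply: bigsetU_measurable => j _; apply: measurable_memE. Qed.

Lemma P_Bset tau r V : (P (Bset tau r V) <= (expR (- b))%:E)%E.
Proof.
have [u a] := Lrec_props V (tau + m - kr tau r) (kr tau r).
have := @ville (Lrec V (kr tau r) (tau + m - kr tau r)) [::] (fun _ => true) 0 u.
have -> : cyl [::] (fun _ => true) `&` [set x | memE (Lrec V (kr tau r) (tau + m - kr tau r)) 0 x] = Bset tau r V.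
  by apply/seteqP; split => x /=; [case | move=> H; split => // i; rewrite in_nil].
rewrite big_nil mul1r sub0r; apply.
apply/allP => i /= ii; move/allP: a => /(_ i ii) /andP[h1 h2].
by rewrite /Dp h2 andbT; apply: leq_trans h1; rewrite /kr leq_maxl.
Qed.

Lemma cover tau : Uset (tau + m) `\` Uset tau `<=` \big[setU/set0]_(r < 2 * m) Bu tau r.
Proof.
move=> x [/in_Uset [t tl [k [k1 k2 k3 [V VV HV]]]] H2].
have tt : (tau <= t)%N.
  by rewrite leqNgt; apply/negP => tl'; apply: H2; apply/in_Uset; exists t => //; exists k; split => //; exists V.
have rl : (k - (tau - m) < 2 * m)%N by lia.
have kE : kr tau (k - (tau - m)) = k by rewrite /kr; lia.
apply/in_bigsetU; exists (Ordinal rl); first by rewrite mem_index_enum.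
rewrite /Bu; apply/in_bigsetU.
have jl : (index V (enum Vs) < #|Vs|)%N by rewrite cardE index_mem mem_enum.
exists (Ordinal jl); first by rewrite mem_index_enum.
rewrite /Bset /= nth_index ?mem_enum // kE.
apply: (memE_Lrec V _ k 0 x t); first lia.
by rewrite add0r -Rstat_Lsum.
Qed.

Lemma tau_bound tau : (1 <= tau)%N ->
  (P [set x | (tau%:R%:E <= TG p0 p1 Vs m m' b G x)%E /\
              (TG p0 p1 Vs m m' b G x < (tau + m)%:R%:E)%E]
    <= ((expR (- b) *+ #|Vs|) *+ (2 * m))%:E)%E.
Proof.
move=> tau1; rewrite Aset_eq.
apply: (@le_trans _ _ (P (\big[setU/set0]_(r < 2 * m) Bu tau r))).
  apply: le_measure; last exact: cover.
  - by rewrite inE; apply: measurableD; apply: measurable_Uset.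
  - by rewrite inE; apply: bigsetU_measurable => r _; apply: measurable_Bu.
apply: le_trans (Boole_inequality _ (fun r _ => measurable_Bu tau r)) _.
have -> : ((expR (- b) *+ #|Vs|) *+ (2 * m))%:E = \sum_(r < 2 * m) ((expR (- b) *+ #|Vs|)%:E).
  by rewrite sumEFin sumr_const card_ord.
apply: lee_sum => r _.
rewrite /Bu.
apply: le_trans (@Boole_inequality _ _ _ P (fun j => Bset tau r (nth (finset.set0 : {set 'I_N}) (enum Vs) j)) _ (fun j _ => measurable_memE _ _)) _.
have -> : (expR (- b) *+ #|Vs|)%:E = \sum_(j < #|Vs|) ((expR (- b))%:E).
  by rewrite sumEFin sumr_const card_ord.
by apply: lee_sum => j _; apply: P_Bset.
Qed.

End Tau.

End Proof.

Theorem lemma1 (d : measure_display) (T : measurableType d) (R : realType)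
  (P : probability T R) (N n : nat) (p0 p1 : R)
  (Vs : {set {set 'I_N}}) (m m' : nat) (b : R)
  (G : nat -> 'I_N -> 'I_N -> T -> bool) :
  (1 <= n)%N -> (n < N)%N ->
  0 < p0 < 1 -> 0 < p1 < 1 ->
  (0 < #|Vs|)%N -> (forall V, V \in Vs -> #|V| = n) ->
  (m' <= m)%N ->
  (* undirected graphs: symmetric adjacency matrices *)
  (forall t i j x, G t i j x = G t j i x) ->
  (* P_infty: all entries G^{(t)}_{ij}, i<j, t>=1, are independent Bernoulli(p0) *)
  (forall t i j, measurable [set x | G t i j x]) ->
  (forall t (i j : 'I_N), (1 <= t)%N -> (i < j)%N -> P [set x | G t i j x] = p0%:E) ->
  mutually_independent P
    [set tij : nat * 'I_N * 'I_N | (1 <= tij.1.1)%N && (tij.1.2 < tij.2)%N]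
    (fun tij => [set x | G tij.1.1 tij.1.2 tij.2 x]) ->
  (ereal_sup [set P [set x | (tau%:R%:E <= TG p0 p1 Vs m m' b G x)%E /\
                            (TG p0 p1 Vs m m' b G x < (tau + m)%:R%:E)%E]
            | tau in [set tau : nat | (1 <= tau)%N]]
    <= (2 * m%:R * expR (- b) * 'C(N, n)%:R)%:E)%E.
Proof.
move=> n1 nN hp0 hp1 Vs0 VsC mm' Gsym mG PG indep.
case/andP: hp0 => p0g p0l; case/andP: hp1 => p1g p1l.
apply: ge_ereal_sup => _ [tau tau1 <-].
apply: le_trans (@tau_bound _ _ _ P N p0 p1 b G p0g p0l p1g p1l mG PG indep Vs m m' tau tau1) _.
rewrite lee_fin.
have vC : (#|Vs| <= 'C(N, n))%N.
  rewrite -[X in 'C(X, _)]card_ord -card_draws; apply: fintype.subset_leq_card; apply/fintype.subsetP => V VV.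
  by rewrite inE VsC.
rewrite -[_ *+ (2 * m)]mulr_natr -[_ *+ #|Vs|]mulr_natr.
apply: (@le_trans _ _ (expR (- b) * 'C(N, n)%:R * (2 * m)%:R)).
  apply: ler_wpM2r; first exact: ler0n.
  by apply: ler_wpM2l; [exact: expR_ge0 | rewrite ler_nat].
by rewrite natrM le_eqVlt; apply/orP; left; apply/eqP; ring.
Qed.
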